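(* For $a_1,a_2\in[n]$, in $\mathbb{Q}[S_n]$, \[B_{a_1}B_{a_2}=\sum_{j=\max(a_1,a_2)}^{\min(a_1+a_2,n)}\frac{a_2!}{(j-a_1)!\,(a_1+a_2-j)!}\cdot\frac{a_1!}{(j-a_2)!}\,B_j.\]
   Context: Elements of $S_n$ are written in deck notation: a word $c_1\cdots c_n$ (a rearrangement of $1,\ldots,n$) is the deck with card $c_i$ in position $i$. Multiplication in $\mathbb{Q}[S_n]$: for $\sigma=c_1\cdots c_n$, $\tau=d_1\cdots d_n$, $\sigma\tau=c_{d_1}\cdots c_{d_n}$, extended bilinearly. For $a\in[n]$, $B_a$ is the sum of all words $c_1\cdots c_n\in S_n$ in which the letters $a+1,\ldots,n$ appear in increasing order from left to right. *)

(* Defs.v *)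
From HB Require Import structures.
From mathcomp Require Import all_boot all_order all_algebra all_fingroup.
Set Implicit Arguments. Unset Strict Implicit. Unset Printing Implicit Defensive.
Import GRing.Theory Num.Theory.
Local Open Scope ring_scope.

(* Deck notation: a permutation s : 'S_n is the word c_1 ... c_n with
   c_(i+1) = (s i) + 1 (0-based positions and card values in 'I_n). *)

Notation QSn n := {ffun 'S_n -> rat}.

(* The paper's product of words: (sigma tau) = c_(d_1) ... c_(d_n),
   i.e. position i holds sigma (tau i); in mathcomp this is (tau * sigma)%g. *)
Definition deck_mul n (s t : 'S_n) : 'S_n := (t * s)%g.

Definition qmul n (f g : QSn n) : QSn n :=
  [ffun p : 'S_n => \sum_(s : 'S_n) \sum_(t : 'S_n | deck_mul s t == p) f s * g t].

(* The word s has the letters a+1,...,n (0-based values a,...,n-1) in increasing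
   order from left to right: their positions s^-1 are increasing. *)
Definition tail_increasing n (a : nat) (s : 'S_n) : bool :=
  [forall x : 'I_n, forall y : 'I_n,
     ((a <= x)%N && (x < y)%N) ==> ((s^-1)%g x < (s^-1)%g y)%N].

Definition B n (a : nat) : QSn n :=
  [ffun s : 'S_n => if tail_increasing a s then 1 else 0].

Definition qscale n (c : rat) (f : QSn n) : QSn n := [ffun s => c * f s].

(* Main.v *)
Require Import Defs.
From HB Require Import structures.
From mathcomp Require Import all_boot all_order all_algebra all_fingroup.
From mathcomp Require Import zify ring.
Import GRing.Theory Num.Theory.

Module S1.

Definition sgv (k x : nat) : nat := if x == k then 0 else if x < k then x.+1 else x.

Definition incr_on (f : nat -> nat) (a N : nat) : Prop :=
  forall x y, a <= x -> x < y -> y < N -> f x < f y.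

Lemma incr_on_ext f g a N : (forall x, x < N -> f x = g x) ->
  incr_on f a N -> incr_on g a N.
Proof.
move=> fg H x y ax xy yN; rewrite -!fg; [exact: H| lia | lia].
Qed.

Lemma sgv_lt k x : x < k -> sgv k x = x.+1.
Proof. by rewrite /sgv => h; rewrite ifF ?h //; apply/eqP; lia. Qed.
Lemma sgv_gt k x : k < x -> sgv k x = x.
Proof. by rewrite /sgv => h; rewrite ifF ?ifF //; apply/negbTE; [rewrite -leqNgt; lia| apply/eqP; lia]. Qed.
Lemma sgv_eq k : sgv k k = 0.
Proof. by rewrite /sgv eqxx. Qed.

Section Count.
Variables (N a : nat) (f : nat -> nat).
Hypothesis finj : forall x y, x < N -> y < N -> f x = f y -> x = y.

Definition Lf (j : nat) : bool := (j < N) && ((j <= a) || (f j < f 0)).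

Lemma case_small k : k < a ->
  incr_on (fun x => f (sgv k x)) a N <-> incr_on f a N.
Proof.
move=> ka; split=> H x y ax xy yN.
  by have := H x y ax xy yN; rewrite !sgv_gt //; lia.
by rewrite !sgv_gt; [exact: H| lia | lia].
Qed.

Lemma case_big k : a <= k -> k < N ->
  incr_on (fun x => f (sgv k x)) a N <->
  [/\ incr_on f a.+1 N, Lf k & ~~ Lf k.+1].
Proof.
move=> ak kN; split.
  move=> H; split.
  - move=> x y ax xy yN.
    have [xk|kx] := leqP x k.
      have [yk|ky] := leqP y k.
        have e1 : sgv k x.-1 = x by rewrite sgv_lt; lia.
        have e2 : sgv k y.-1 = y by rewrite sgv_lt; lia.
        by have := H x.-1 y.-1; rewrite e1 e2; apply; lia.
      have e1 : sgv k x.-1 = x by rewrite sgv_lt; lia.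
      have e2 : sgv k y = y by rewrite sgv_gt.
      by have := H x.-1 y; rewrite e1 e2; apply; lia.
    have e1 : sgv k x = x by rewrite sgv_gt.
    have e2 : sgv k y = y by rewrite sgv_gt; lia.
    by have := H x y; rewrite e1 e2; apply; lia.
  - rewrite /Lf kN /=; have [//|ak'] := leqP k a.
    have e1 : sgv k k.-1 = k by rewrite sgv_lt; lia.
    by have := H k.-1 k; rewrite e1 sgv_eq; apply; lia.
  - rewrite /Lf negb_and; case: (ltnP k.+1 N) => kN' //=.
    rewrite negb_or -ltnNge ltnS ak /= -leqNgt.
    by have := H k k.+1; rewrite sgv_eq sgv_gt //; move=> h; apply: ltnW; apply: h.
case=> I Lk nLk x y ax xy yN.
have [xk|xk|xk] := ltngtP x k.
- have [yk|yk|yk] := ltngtP y k.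
  + by rewrite !sgv_lt //; apply: I; lia.
  + by rewrite sgv_lt // sgv_gt //; apply: I; lia.
  + subst y; rewrite sgv_lt // sgv_eq.
    move: Lk; rewrite /Lf kN /=; have [//|ak' /= fk] := leqP k a; first by lia.
    have [e|ne] := eqVneq x.+1 k; first by rewrite e.
    by apply: ltn_trans fk; apply: I; lia.
- by rewrite !sgv_gt //; [apply: I; lia | lia].
- subst x; rewrite sgv_eq sgv_gt //.
  have kN' : k.+1 < N by lia.
  move: nLk; rewrite /Lf kN' /= negb_or -ltnNge ltnS => /andP[_].
  rewrite -leqNgt leq_eqVlt => /orP[/eqP e|f0].
    by have := @finj 0 k.+1 ltac:(lia) kN' e.
  have [e|ne] := eqVneq y k.+1; first by rewrite e.
  by apply: ltn_trans f0 _; apply: I; lia.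
Qed.

Lemma L_mono k : a <= k -> incr_on f a.+1 N -> Lf k.+1 -> Lf k.
Proof.
move=> ak I; rewrite /Lf => /andP[kN /orP[ka|fk]].
  apply/andP; split; [lia| apply/orP; left; lia].
apply/andP; split; first by lia.
have [//|ak'] := leqP k a; apply/orP; right.
by apply: ltn_trans fk; apply: I; lia.
Qed.

End Count.

End S1.
Import S1.

Module S2.
Set Implicit Arguments. Unset Strict Implicit.

Lemma incr_perm m (w : 'S_m) : (forall x y : 'I_m, x < y -> w x < w y) -> w = 1%g.
Proof.
have ge : forall w : 'S_m, (forall x y : 'I_m, x < y -> w x < w y) ->
    forall x : 'I_m, x <= w x.
  move=> v Hv x; suff: forall i (x : 'I_m), x = i :> nat -> i <= v x by apply.
  elim=> [|i IH] z ez; first by [].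
  have im : i < m by have := ltn_ord z; lia.
  have := IH (Ordinal im) erefl.
  have := Hv (Ordinal im) z; rewrite /= ez => /(_ (ltnSn _)); lia.
move=> Hw.
have Hinv : forall x y : 'I_m, x < y -> w^-1%g x < w^-1%g y.
  move=> x y xy; case: (ltngtP (w^-1%g x) (w^-1%g y)) => // h.
    by have := Hw _ _ h; rewrite !permKV; lia.
  by move/val_inj/perm_inj: h => e; move: xy; rewrite e ltnn.
apply/permP => x; apply: ord_inj; rewrite perm1.
have := ge _ Hw x; have := ge _ Hinv (w x); rewrite permK; lia.
Qed.

Section Perm.
Variable n : nat.

Definition rk (k : 'I_n.+1) : 'S_n.+1 := lift_perm ord0 k 1%g.

Lemma rk0 k : rk k ord0 = k.
Proof. exact: lift_perm_id. Qed.

Lemma rk_lift k j : rk k (lift ord0 j) = lift k j.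
Proof. by rewrite /rk lift_perm_lift perm1. Qed.

Lemma rkV_val k (z : 'I_n.+1) : nat_of_ord ((rk k)^-1%g z) = sgv k z.
Proof.
case: (unliftP k z) => [j ->|->].
  have e : (rk k)^-1%g (lift k j) = lift ord0 j by rewrite -rk_lift permK.
  rewrite e lift0 /sgv /= /bump; clear e; move: j; rewrite /= => j.
  case: (leqP k j) => h /=; case: eqP => e2;
    try lia; case: ifP => h2; lia.
by rewrite sgv_eq -{2}(rk0 k) permK.
Qed.

Lemma tiP a (t : 'S_n.+1) :
  reflect (incr_on (fun x => nat_of_ord (t^-1%g (inord x))) a n.+1) (tail_increasing a t).
Proof.
apply: (iffP forallP) => H.
  move=> x y ax xy yN; have xN : x < n.+1 by lia.
  have := forallP (H (inord x)) (inord y); rewrite !inordK //.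
  by move/implyP; apply; rewrite ax.
move=> x; apply/forallP => y; apply/implyP => /andP[ax xy].
by have := H x y ax xy (ltn_ord y); rewrite !inord_val.
Qed.

Lemma T1_rk k : tail_increasing 1 (rk k)^-1%g.
Proof.
apply/forallP => x; apply/forallP => y; apply/implyP => /andP[x1 xy].
rewrite invgK.
case: (unliftP ord0 x) => [x' ex|ex]; last by move: x1; rewrite ex.
case: (unliftP ord0 y) => [y' ey|ey]; last by move: xy; rewrite ey.
rewrite ex ey !rk_lift /= /bump.
move: xy; rewrite ex ey !lift0; case: (leqP k x'); case: (leqP k y') => /=; lia.
Qed.

Lemma T1_char s : tail_increasing 1 s -> s = (rk (s^-1%g ord0))^-1%g.
Proof.
move=> H; set k := s^-1%g ord0.
suff: (s^-1 * (rk k)^-1 = 1)%g.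
  by move/eqP; rewrite -eq_mulgV1 => /eqP <-; rewrite invgK.
apply: incr_perm => x y xy; rewrite !permM !rkV_val.
have sne : forall z : 'I_n.+1, z != ord0 -> (s^-1%g z != k :> nat).
  by move=> z zn; apply/negP => /eqP/val_inj/perm_inj e; move: zn; rewrite e eqxx.
have sgv_pos : forall v : nat, v != k -> 0 < sgv k v.
  move=> v hv; rewrite /sgv (negbTE hv); case: ifP => h; move/eqP: hv; lia.
have sgv_mono : forall u v : nat, u < v -> u != k -> v != k -> sgv k u < sgv k v.
  move=> u v uv hu hv; rewrite /sgv (negbTE hu) (negbTE hv).
  move/eqP: hu; move/eqP: hv; case: ifP; case: ifP => h1 h2; lia.
have yn0 : y != ord0 by apply/negP => /eqP e; move: xy; rewrite e.
have [x0|xn0] := eqVneq x ord0.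
  by rewrite x0 -/k sgv_eq; apply: sgv_pos; apply: sne.
apply: sgv_mono; [|exact: sne|exact: sne].
have x1 : 0 < x.
  by move: xn0; apply: contraNT; rewrite -leqNgt leqn0 => /eqP e; apply/eqP/val_inj.
move/tiP: H => H.
by have := H x y; rewrite !inord_val; apply; [lia|lia|apply: ltn_ord].
Qed.

End Perm.

End S2.
Import S2.

Module S3.
Set Implicit Arguments. Unset Strict Implicit.
Local Open Scope ring_scope.

Lemma qmulE n (f g : QSn n) p : qmul f g p = \sum_s f s * g (p * s^-1)%g.
Proof.
rewrite ffunE; apply: eq_bigr => s _; rewrite (big_pred1 (p * s^-1)%g) // => t /=.
rewrite /deck_mul; apply/eqP/eqP => [<-|->]; by rewrite ?mulgK ?mulgKV.
Qed.

Lemma Bnat n a s : B n a s = (tail_increasing a s)%:R.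
Proof. by rewrite ffunE; case: ifP. Qed.

Section CountA.
Variables (n : nat) (p : 'S_n.+1).

Definition fp (x : nat) : nat := nat_of_ord (p^-1%g (inord x)).

Lemma fp_inj x y : (x < n.+1)%N -> (y < n.+1)%N -> fp x = fp y -> x = y.
Proof.
move=> xn yn /val_inj/perm_inj e.
by rewrite -(inordK xn) -(inordK yn) e.
Qed.

Lemma tiPk a (k : 'I_n.+1) :
  tail_increasing a (p * rk k)%g <-> incr_on (fun x => fp (sgv k x)) a n.+1.
Proof.
have pw : forall x, (x < n.+1)%N ->
    nat_of_ord ((p * rk k)^-1%g (inord x)) = fp (sgv k x).
  move=> x xn; rewrite invMg permM /fp; congr (nat_of_ord (p^-1%g _)).
  have e : sgv k x = nat_of_ord ((rk k)^-1%g (inord x)) by rewrite rkV_val inordK.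
  by apply: val_inj; rewrite /= e inordK // -e ?e ltn_ord.
split=> [/tiP H|H]; first exact: incr_on_ext H.
by apply/tiP; apply: incr_on_ext H => x xn; rewrite pw.
Qed.

Lemma count_A a : (a <= n.+1)%N ->
  qmul (B n.+1 1) (B n.+1 a) p =
  a%:R * B n.+1 a p + (if (a < n.+1)%N then B n.+1 a.+1 p else 0).
Proof.
move=> han; rewrite qmulE.
have -> : \sum_s B n.+1 1 s * B n.+1 a (p * s^-1)%g =
    \sum_(s in [set s | tail_increasing 1 s]) B n.+1 a (p * s^-1)%g.
  by rewrite [RHS]big_mkcond; apply: eq_bigr => s _; rewrite inE ffunE; case: ifP => _;
    rewrite ?mul1r ?mul0r.
have -> : [set s | tail_increasing 1 s] = [set (rk k)^-1%g | k : 'I_n.+1].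
  apply/setP => s; rewrite inE; apply/idP/imsetP.
    by move/T1_char => e; exists (s^-1%g ord0).
  by case=> k _ ->; apply: T1_rk.
rewrite big_imset /=; last first.
  by move=> k1 k2 _ _ /invg_inj e; rewrite -(rk0 k1) e rk0.
transitivity (\sum_(0 <= k < n.+1)
    ((tail_increasing a (p * rk (inord k))%g : nat)%:R : rat)).
  by rewrite big_mkord; apply: eq_big => // i _; rewrite invgK Bnat inord_val.
rewrite (@big_cat_nat _ _ _ a 0 n.+1) //=.
rewrite (eq_big_nat _ _ (F2 := fun _ => (tail_increasing a p : nat)%:R)); last first.
  move=> k /andP[_ ka]; congr (_ %:R); congr (nat_of_bool _).
  have kn : (k < n.+1)%N by lia.
  apply/idP/idP => [/tiPk|H].
    rewrite inordK // => /(@case_small n.+1 a fp k ka) H; apply/tiP; exact: H.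
  by apply/tiPk; rewrite inordK //; apply/(@case_small n.+1 a fp k ka); apply/tiP.
rewrite sumr_const_nat subn0 -Bnat mulr_natl.
congr (_ + _).
have [an|] := ltnP a n.+1; last first.
  by move=> na; rewrite big_geq // ltnNge na.
rewrite (eq_big_nat _ _ (F2 := fun k =>
   ([&& tail_increasing a.+1 p, Lf n.+1 a fp k & ~~ Lf n.+1 a fp k.+1] : nat)%:R)); last first.
  move=> k /andP[ak kn]; congr (_ %:R); congr (nat_of_bool _).
  apply/idP/and3P => [/tiPk|[H1 H2 H3]].
    rewrite inordK // => /(@case_big n.+1 a fp fp_inj k ak kn) [H1 H2 H3]; split => //; exact/tiP.
  apply/tiPk; rewrite inordK //; apply/(@case_big n.+1 a fp fp_inj k ak kn); split => //; exact/tiP.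
rewrite Bnat; case: (boolP (tail_increasing a.+1 p)) => Ht /=; last by rewrite big1.
have I : incr_on fp a.+1 n.+1 by apply/tiP.
rewrite (@telescope_sumr_eq _ a n.+1 (fun k => - (Lf n.+1 a fp k : nat)%:R)) ?(ltnW an) //; last first.
  move=> k /andP[ak kn].
  have := @L_mono n.+1 a fp k ak I.
  case: (Lf n.+1 a fp k.+1); case: (Lf n.+1 a fp k) => /= h;
    [by rewrite subrr | by have := h erefl | by rewrite oppr0 opprK add0r | by rewrite subrr].
rewrite /Lf ltnn an leqnn /=.
by rewrite mulr0n oppr0 mulr1n opprK add0r.
Qed.
End CountA.

End S3.
Import S3.

Module S4.
Set Implicit Arguments. Unset Strict Implicit.

Definition D (a1 a2 j : nat) : nat :=
  if j <= a1 + a2 then 'C(a1, a1 + a2 - j) * a2 ^_ (a1 + a2 - j) else 0.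

Lemma D_small a1 a2 j : j < a1 -> D a1 a2 j = 0.
Proof. by rewrite /D; case: ifP => // _ h; rewrite ffact_small ?muln0 //; lia. Qed.

Lemma D_small2 a1 a2 j : j < a2 -> D a1 a2 j = 0.
Proof. by rewrite /D; case: ifP => // _ h; rewrite bin_small ?mul0n //; lia. Qed.

Lemma D_big a1 a2 j : a1 + a2 < j -> D a1 a2 j = 0.
Proof. by rewrite /D; case: ifP => // h1 h2; lia. Qed.

Lemma D0 a2 j : D 0 a2 j = (j == a2).
Proof.
rewrite /D add0n; case: ifP => h.
  rewrite bin0n; have [->|ne] := eqVneq j a2; first by rewrite subnn eqxx.
  have -> : (a2 - j == 0) = false by apply/negbTE; lia.
  by [].
by have -> : (j == a2) = false by apply/negbTE; lia.
Qed.

Lemma D_rec a1 a2 j : a1 <= j.+1 ->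
  D a1.+1 a2 j.+1 = D a1 a2 j.+1 * (j.+1 - a1) + D a1 a2 j.
Proof.
move=> h; rewrite /D.
case: ifP => c1; case: ifP => c2; case: ifP => c3; try lia.
  have e1 : a1.+1 + a2 - j.+1 = (a1 + a2 - j.+1).+1 by lia.
  have e2 : a1 + a2 - j = (a1 + a2 - j.+1).+1 by lia.
  have e3 : j.+1 - a1 = a2 - (a1 + a2 - j.+1) by lia.
  rewrite e1 e2 e3; set k := a1 + a2 - j.+1.
  rewrite binS ffactnSr; ring.
have e1 : a1.+1 + a2 - j.+1 = 0 by lia.
have e2 : a1 + a2 - j = 0 by lia.
by rewrite e1 e2 !bin0 !ffactn0 mul0n.
Qed.

Local Open Scope ring_scope.

Lemma D_recR a1 a2 j : ((D a1.+1 a2 j.+1)%:R : rat) =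
  (D a1 a2 j.+1)%:R * (j.+1%:R - a1%:R) + (D a1 a2 j)%:R.
Proof.
case: (leqP a1 j.+1) => h; first by rewrite D_rec // natrD natrM natrB.
by rewrite !D_small ?mul0r ?addr0 //; lia.
Qed.

Lemma sum_step N a1 a2 (b : nat -> rat) :
  \sum_(0 <= j < N.+1) (D a1 a2 j)%:R * (j%:R * b j + (if (j < N)%N then b j.+1 else 0))
  - a1%:R * \sum_(0 <= j < N.+1) (D a1 a2 j)%:R * b j
  = \sum_(0 <= j < N.+1) (D a1.+1 a2 j)%:R * b j.
Proof.
rewrite mulr_sumr -sumrB.
rewrite (eq_bigr (fun j => (D a1 a2 j)%:R * (j%:R - a1%:R) * b j +
   (D a1 a2 j)%:R * (if (j < N)%N then b j.+1 else 0))); last by move=> j _; ring.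
rewrite big_split /=.
rewrite big_nat_recl // [X in _ + X = _]big_nat_recr //= ltnn mulr0 addr0.
rewrite [RHS]big_nat_recl // (@D_small a1.+1 a2 0) // mul0r add0r.
rewrite (_ : (D a1 a2 0)%:R * _ * b 0%N = 0 :> rat); last first.
  by case: a1 => [|a1]; [rewrite mulr0n oppr0 mulr0 mul0r | rewrite D_small // !mul0r].
rewrite !add0r -big_split /=.
apply: eq_big_nat => j /andP[_ jN]; rewrite jN D_recR; ring.
Qed.

End S4.
Import S4.

Module S5.
Set Implicit Arguments. Unset Strict Implicit.
Local Open Scope ring_scope.

Lemma qmulA n (f g h : QSn n) : qmul (qmul f g) h = qmul f (qmul g h).
Proof.
apply/ffunP => x; rewrite !qmulE.
under eq_bigr do rewrite qmulE mulr_suml.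
under [RHS]eq_bigr do rewrite qmulE mulr_sumr.
rewrite exchange_big /=; apply: eq_bigr => u _.
rewrite (reindex_inj (mulIg u)) /=; apply: eq_bigr => v _.
by rewrite mulgK invMg mulgA mulrA.
Qed.

Lemma qmul_sumr n (f : QSn n) (r : seq nat) (c : nat -> rat) (g : nat -> QSn n) x :
  qmul f (\sum_(j <- r) qscale (c j) (g j)) x = \sum_(j <- r) c j * qmul f (g j) x.
Proof.
rewrite qmulE; under eq_bigr do rewrite sum_ffunE mulr_sumr.
rewrite exchange_big /=; apply: eq_bigr => j _; rewrite qmulE mulr_sumr.
by apply: eq_bigr => s _; rewrite ffunE mulrCA.
Qed.

Lemma sum_qscaleE n (r : seq nat) (c : nat -> rat) (g : nat -> QSn n) x :
  (\sum_(j <- r) qscale (c j) (g j)) x = \sum_(j <- r) c j * g j x.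
Proof. by rewrite sum_ffunE; apply: eq_bigr => j _; rewrite ffunE. Qed.

Lemma ti0 n (s : 'S_n) : tail_increasing 0 s = (s == 1%g).
Proof.
apply/idP/eqP => [H|->].
  have : (s^-1 = 1)%g.
    apply: incr_perm => x y xy; exact: (implyP (forallP (forallP H x) y)).
  by move/(congr1 invg); rewrite invgK invg1.
by apply/forallP => x; apply/forallP => y; apply/implyP => /andP[_]; rewrite invg1 !perm1.
Qed.

Lemma qmul_B0 n (g : QSn n) x : qmul (B n 0) g x = g x.
Proof.
rewrite qmulE (bigD1 1%g) //= big1 ?addr0.
  by rewrite Bnat ti0 eqxx mul1r invg1 mulg1.
by move=> s /negbTE hs; rewrite Bnat ti0 hs mul0r.
Qed.

Lemma main_nat n a1 a2 : (a1 <= n.+1)%N -> (a2 <= n.+1)%N ->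
  qmul (B n.+1 a1) (B n.+1 a2) =
  \sum_(0 <= j < n.+2) qscale (D a1 a2 j)%:R (B n.+1 j).
Proof.
move=> + h2; elim: a1 => [|a1 IH] h1.
  apply/ffunP => x; rewrite qmul_B0 sum_ffunE.
  rewrite (bigD1_seq a2); [|rewrite mem_index_iota; lia|by rewrite /index_iota iota_uniq].
  rewrite big1_seq; first by rewrite !ffunE D0 eqxx /=; ring.
  by move=> j /andP[hj _]; rewrite !ffunE D0 (negbTE hj) /= mul0r.
have IH' := IH (ltnW h1).
have eB : forall s, B n.+1 a1.+1 s = qmul (B n.+1 1) (B n.+1 a1) s - a1%:R * B n.+1 a1 s.
  by move=> s; rewrite count_A ?(ltnW h1) // h1; ring.
apply/ffunP => x; rewrite qmulE.
under eq_bigr do rewrite eB mulrBl -mulrA.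
rewrite sumrB -mulr_sumr -!qmulE qmulA IH' qmul_sumr !sum_qscaleE.
rewrite (eq_big_nat _ _ (F2 := fun j => (D a1 a2 j)%:R *
   (j%:R * B n.+1 j x + (if (j < n.+1)%N then B n.+1 j.+1 x else 0)))); last first.
  by move=> j /andP[_ hj]; rewrite count_A.
exact: (sum_step (n.+1) a1 a2 (fun j => B n.+1 j x)).
Qed.

Lemma D_closed a1 a2 j : (maxn a1 a2 <= j)%N -> (j <= a1 + a2)%N ->
  ((D a1 a2 j)%:R : rat) = (a2`!)%:R / (((j - a1)`!)%:R * ((a1 + a2 - j)`!)%:R) *
             ((a1`!)%:R / ((j - a2)`!)%:R).
Proof.
move=> hl hh; rewrite /D ifT //.
have nz : forall m, (m`!%:R : rat) != 0 by move=> m; rewrite pnatr_eq0 -lt0n fact_gt0.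
have f1 := @bin_fact a1 (a1 + a2 - j) ltac:(lia).
have f2 := @ffact_fact a2 (a1 + a2 - j) ltac:(lia).
have e1 : (a1 - (a1 + a2 - j) = j - a2)%N by lia.
have e2 : (a2 - (a1 + a2 - j) = j - a1)%N by lia.
rewrite e1 in f1; rewrite e2 in f2.
rewrite -f1 -f2 !natrM.
by field; rewrite !nz.
Qed.


End S5.
Import S5.

Local Open Scope ring_scope.

Theorem mainTheorem7 (n a1 a2 : nat) :
  (1 <= a1 <= n)%N -> (1 <= a2 <= n)%N ->
  qmul (B n a1) (B n a2) =
  \sum_(maxn a1 a2 <= j < (minn (a1 + a2) n).+1)
     qscale ((a2`!)%:R / (((j - a1)`!)%:R * ((a1 + a2 - j)`!)%:R) *
             ((a1`!)%:R / ((j - a2)`!)%:R) : rat) (B n j).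
Proof.
case: n => [|n] /andP[h1 h1'] /andP[h2 h2']; first by lia.
rewrite main_nat //.
have qs0 : forall f : QSn n.+1, qscale (0%N)%:R f = 0.
  by move=> f; apply/ffunP => s; rewrite !ffunE mul0r.
rewrite (@big_cat_nat _ _ _ (maxn a1 a2) 0 n.+2) //=; last by lia.
rewrite (@big_cat_nat _ _ _ (minn (a1 + a2) n.+1).+1 (maxn a1 a2) n.+2) /=; [|lia|lia].
rewrite big1_seq ?add0r; last first.
  move=> j /andP[_]; rewrite mem_index_iota => hj.
  case: (ltnP j a1) => ha; [rewrite D_small // | rewrite D_small2 //; lia].
rewrite [X in _ + X]big1_seq ?addr0; last first.
  by move=> j /andP[_]; rewrite mem_index_iota => hj; rewrite D_big //; lia.
apply: eq_big_nat => j hj; rewrite D_closed //; lia.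
Qed.
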